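(* Let $\mathcal{S}\subset\mathbb{R}^n$ be compact convex with $\|x\|\le D$ for all $x\in\mathcal{S}$ ($D\ge1$), let $f_1,\dots,f_T:\mathcal{S}\to\mathbb{R}$ be differentiable and $\ell$-strongly convex with $\|\nabla f_t(x)\|\le G$ on $\mathcal{S}$, and let $V\ge0$. Let $\theta_1\in\mathcal{S}$ and $\theta_{t+1}=\operatorname{argmin}_{\theta\in\mathcal{S}}\|\theta-(\theta_t-\eta_t\nabla f_t(\theta_t))\|^2$ with $\eta_t=\frac{1-\gamma}{\ell(1-\gamma^t)}$ and $$\gamma=1-\frac12\sqrt{\frac{\max\{V,\log^2T/T\}}{2DT}}.$$ Then for all $z_1,\dots,z_T\in\mathcal{S}$ with $\sum_{t=2}^T\|z_t-z_{t-1}\|\le V$, $$\sum_{t=1}^T\big(f_t(\theta_t)-f_t(z_t)\big)\le\max\{O(\log T),O(\sqrt{TV})\}.$$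
   Context: $\ell$-strongly convex: $f(y)\ge f(x)+\nabla f(x)^\top(y-x)+\frac\ell2\|x-y\|^2$. $O(\cdot)$ hides constants depending only on $\ell,G,D$. *)

(* Defs.v *)
From HB Require Import structures.
From mathcomp Require Import all_boot all_order all_algebra.
From mathcomp Require Import all_classical all_reals all_analysis.
Set Implicit Arguments. Unset Strict Implicit. Unset Printing Implicit Defensive.
Import Order.TTheory GRing.Theory Num.Theory.
Import numFieldNormedType.Exports.
Local Open Scope classical_set_scope.
Local Open Scope ring_scope.

Definition dotv (R : realType) (n : nat) (u v : 'rV[R]_n) : R :=
  \sum_(i < n) u ord0 i * v ord0 i.
Definition enorm (R : realType) (n : nat) (v : 'rV[R]_n) : R :=
  Num.sqrt (dotv v v).

Definition grad (R : realType) (n : nat) (f : 'rV[R]_n -> R) (x : 'rV[R]_n)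
  : 'rV[R]_n := \row_(i < n) ('d f x (delta_mx ord0 i : 'rV[R]_n)).

Definition strongly_convex_on (R : realType) (n : nat) (l : R)
  (S : set 'rV[R]_n) (f : 'rV[R]_n -> R) : Prop :=
  forall x y, S x -> S y ->
    f y >= f x + dotv (grad f x) (y - x) + l / 2 * enorm (x - y) ^+ 2.

Definition is_proj (R : realType) (n : nat) (S : set 'rV[R]_n)
  (w p : 'rV[R]_n) : Prop :=
  S p /\ forall y, S y -> enorm (p - w) ^+ 2 <= enorm (y - w) ^+ 2.

(* Main.v *)
Require Import Defs.
From HB Require Import structures.
From mathcomp Require Import all_boot all_order all_algebra.
From mathcomp Require Import all_classical all_reals all_analysis.
From mathcomp Require Import ring lra.
Import Order.TTheory GRing.Theory Num.Theory.
Import numFieldNormedType.Exports.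
Local Open Scope classical_set_scope.
Local Open Scope ring_scope.

Section Dot.
Variable (R : realType) (n : nat).
Implicit Types u v w : 'rV[R]_n.

Lemma dotvC u v : dotv u v = dotv v u.
Proof. by rewrite /dotv; apply: eq_bigr => i _; rewrite mulrC. Qed.
Lemma dotvDl u v w : dotv (u + v) w = dotv u w + dotv v w.
Proof. by rewrite /dotv -big_split; apply: eq_bigr => i _; rewrite !mxE mulrDl. Qed.
Lemma dotvZl c u w : dotv (c *: u) w = c * dotv u w.
Proof. by rewrite /dotv mulr_sumr; apply: eq_bigr => i _; rewrite !mxE mulrA. Qed.
Lemma dotvNl u w : dotv (- u) w = - dotv u w.
Proof. by rewrite -scaleN1r dotvZl mulN1r. Qed.
Lemma dotvBl u v w : dotv (u - v) w = dotv u w - dotv v w.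
Proof. by rewrite dotvDl dotvNl. Qed.
Lemma dotvDr u v w : dotv w (u + v) = dotv w u + dotv w v.
Proof. by rewrite dotvC dotvDl !(dotvC w). Qed.
Lemma dotvZr c u w : dotv w (c *: u) = c * dotv w u.
Proof. by rewrite dotvC dotvZl dotvC. Qed.
Lemma dotvBr u v w : dotv w (u - v) = dotv w u - dotv w v.
Proof. by rewrite dotvC dotvBl !(dotvC w). Qed.
Lemma dotv_ge0 u : 0 <= dotv u u.
Proof. by rewrite /dotv; apply: sumr_ge0 => i _; rewrite -expr2 sqr_ge0. Qed.
Lemma enorm_ge0 u : 0 <= enorm u.
Proof. exact: sqrtr_ge0. Qed.
Lemma enorm_sq u : enorm u ^+ 2 = dotv u u.
Proof. by rewrite /enorm sqr_sqrtr // dotv_ge0. Qed.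

Lemma nsqD u v : dotv (u + v) (u + v) = dotv u u + 2 * dotv u v + dotv v v.
Proof. rewrite !dotvDl !dotvDr (dotvC v u); ring. Qed.
Lemma nsqB u v : dotv (u - v) (u - v) = dotv u u - 2 * dotv u v + dotv v v.
Proof. rewrite !dotvBl !dotvBr (dotvC v u); ring. Qed.
Lemma nsqZ c u : dotv (c *: u) (c *: u) = c ^+ 2 * dotv u u.
Proof. rewrite dotvZl dotvZr; ring. Qed.

Lemma CS2 u v : dotv u v ^+ 2 <= dotv u u * dotv v v.
Proof.
set A := dotv v v; set B := dotv u v; set C := dotv u u.
have key c : 0 <= C - 2 * c * B + c ^+ 2 * A.
  have := dotv_ge0 (u - c *: v).
  by rewrite nsqB dotvZr nsqZ -/A -/B -/C mulrA.
have A0 : 0 <= A by apply: dotv_ge0.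
have [Ap|Az] := ltrP 0 A.
  have := key (B / A).
  set k := B / A => h.
  have hk : k * A = B by rewrite /k mulfVK // gt_eqF.
  have : 0 <= A * (C - 2 * k * B + k ^+ 2 * A) by apply: mulr_ge0.
  have -> : A * (C - 2 * k * B + k ^+ 2 * A) = A * C - 2 * B * (k * A) + (k * A) ^+ 2.
    ring.
  rewrite hk => h2. nra.
have A00 : A = 0 by apply/eqP; rewrite eq_le Az A0.
have [B0|B0] := eqVneq B 0.
  by rewrite B0 expr0n /= mulr_ge0 // dotv_ge0.
have := key ((C + 1) / (2 * B)).
rewrite A00 mulr0 addr0.
have -> : 2 * ((C + 1) / (2 * B)) * B = C + 1.
  by field; rewrite B0.
lra.
Qed.

Lemma CS u v : dotv u v <= enorm u * enorm v.
Proof.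
rewrite /enorm -sqrtrM ?dotv_ge0 //.
apply: le_trans (ler_norm _) _.
rewrite -sqrtr_sqr; apply: ler_wsqrtr; exact: CS2.
Qed.
End Dot.
Arguments dotvC {R n}.
Arguments dotvDl {R n}.
Arguments dotvZl {R n}.
Arguments dotvNl {R n}.
Arguments dotvBl {R n}.
Arguments dotvDr {R n}.
Arguments dotvZr {R n}.
Arguments dotvBr {R n}.
Arguments dotv_ge0 {R n}.
Arguments enorm_ge0 {R n}.
Arguments enorm_sq {R n}.
Arguments nsqD {R n}.
Arguments nsqB {R n}.
Arguments nsqZ {R n}.
Arguments CS2 {R n}.
Arguments CS {R n}.
Section Proj.
Variable (R : realType) (n : nat).
Implicit Types u v w : 'rV[R]_n.

Lemma convS (S : set 'rV[R]_n) (cS : convex_set S) x y (s : R) :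
  0 <= s <= 1 -> S x -> S y -> S (s *: x + (1 - s) *: y).
Proof.
move=> s01 Sx Sy.
have H : Itv.spec (@Itv.num_sem R) (Itv.Real `[0%Z, 1%Z]) s.
  by rewrite /Itv.spec /Itv.num_sem /= in_itv /= num_real.
have := cS x y (Itv.mk H).
by rewrite !inE; move=> /(_ Sx Sy).
Qed.

Lemma proj_nonexp (S : set 'rV[R]_n) (cS : convex_set S) w p y :
  is_proj S w p -> S y -> dotv (p - y) (p - y) <= dotv (w - y) (w - y).
Proof.
move=> [Sp Hp] Sy.
set b := dotv (p - w) (y - p); set c := dotv (y - p) (y - p).
have c0 : 0 <= c by apply: dotv_ge0.
have key s : 0 < s <= 1 -> 0 <= 2 * s * b + s ^+ 2 * c.
  move=> /andP[s0 s1].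
  have Sq : S (s *: y + (1 - s) *: p) by apply: convS => //; rewrite s1 ltW.
  have := Hp _ Sq.
  have -> : s *: y + (1 - s) *: p - w = (p - w) + s *: (y - p).
    by apply/rowP => i; rewrite !mxE; ring.
  rewrite !enorm_sq [X in _ <= X]nsqD; rewrite dotvZr nsqZ -/b -/c. lra.
have b0 : 0 <= b.
  rewrite leNgt; apply/negP => bn.
  have [cb|cb] := lerP c (- b).
    have := key 1; rewrite lexx ltr01 => /(_ isT). lra.
  have cp : 0 < c by lra.
  have := key (- b / c).
  have -> : 2 * (- b / c) * b + (- b / c) ^+ 2 * c = (- b / c) * b.
    by field; rewrite gt_eqF.
  have sp : 0 < - b / c by apply: divr_gt0; lra.
  have s1 : - b / c <= 1 by rewrite ler_pdivrMr // mul1r ltW.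
  rewrite sp s1 => /(_ isT).
  rewrite pmulr_rge0 //. lra.
have -> : w - y = (p - y) - (p - w).
  by apply/rowP => i; rewrite !mxE; ring.
rewrite [X in _ <= X]nsqB.
have -> : dotv (p - y) (p - w) = - b.
  have -> : p - y = (-1) *: (y - p) by apply/rowP => i; rewrite !mxE; ring.
  by rewrite dotvZl dotvC mulN1r.
have := dotv_ge0 (p - w). lra.
Qed.
End Proj.
Arguments proj_nonexp {R n S} cS {w p y}.
Section Reals.
Variable R : realType.

Lemma bernoulli (a : R) t : 0 <= a -> 1 + a * t%:R <= (1 + a) ^+ t.
Proof.
move=> a0; elim: t => [|t IH]; first by rewrite mulr0 addr0 expr0.
rewrite exprS -natr1.
have h : 0 <= 1 + a by lra.
have := ler_wpM2l h IH.
have : 0 <= a * a * t%:R by rewrite mulr_ge0 // mulr_ge0.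
nra.
Qed.

Lemma geom_s (g : R) t : (1 - g) * (\sum_(k < t) g ^+ k) = 1 - g ^+ t.
Proof.
elim: t => [|t IH]; first by rewrite big_ord0 mulr0 expr0 subrr.
by rewrite big_ord_recr /= mulrDr IH exprS; ring.
Qed.

Lemma pow_bound (a : R) t : 0 <= a <= 1 -> (1 - a) ^+ t * (1 + a * t%:R) <= 1.
Proof.
move=> /andP[a0 a1].
have h1 : 0 <= (1 - a) ^+ t by apply: exprn_ge0; lra.
have := ler_wpM2l h1 (bernoulli a t a0).
have : ((1 - a) ^+ t * (1 + a) ^+ t) <= 1.
  rewrite -exprMn; apply: exprn_ile1; nra.
lra.
Qed.

Lemma harmonic T : (1 <= T)%N -> \sum_(1 <= t < T.+1) (t%:R : R)^-1 <= 1 + ln T%:R.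
Proof.
elim: T => [//|T IH] _.
have [->|T1] := eqVneq T 0%N.
  by rewrite big_nat1 invr1 ln1 addr0.
have T1' : (1 <= T)%N by rewrite lt0n.
rewrite big_nat_recr //=.
have := IH T1'.
have Tp : (0 : R) < T%:R by rewrite ltr0n.
have T1p : (0 : R) < T.+1%:R by rewrite ltr0n.
have key : (T.+1%:R : R)^-1 <= ln T.+1%:R - ln T%:R.
  have h : - 1 < - (T.+1%:R : R)^-1.
    rewrite ltrN2 invf_lt1 // ltr1n //.
  have := le_ln1Dx h.
  have -> : 1 - (T.+1%:R : R)^-1 = T%:R / T.+1%:R.
    by rewrite -natr1; field; rewrite -natr1 in T1p; rewrite gt_eqF.
  by rewrite ln_div ?posrE // -lerN2 opprB opprK.
move=> H; apply: le_trans (lerD H key) _.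
lra.
Qed.
End Reals.
Arguments bernoulli {R}.
Arguments geom_s {R}.
Arguments pow_bound {R}.
Section Main.
Variable (R : realType) (n : nat).
Implicit Types u v w : 'rV[R]_n.

Lemma par_ineq u v : 2 * dotv u v <= dotv u u + dotv v v.
Proof. have := dotv_ge0 (u - v); rewrite nsqB; lra. Qed.
Lemma par_ineq' u v : - (2 * dotv u v) <= dotv u u + dotv v v.
Proof. have := dotv_ge0 (u + v); rewrite nsqD; lra. Qed.
Lemma nsqD_le u v : dotv (u + v) (u + v) <= 2 * dotv u u + 2 * dotv v v.
Proof. have := par_ineq u v; rewrite nsqD; lra. Qed.
Lemma nsqB_le u v : dotv (u - v) (u - v) <= 2 * dotv u u + 2 * dotv v v.
Proof. have := par_ineq' u v; rewrite nsqB; lra. Qed.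

Lemma nsq_bound u (D : R) : 0 <= D -> enorm u <= D -> dotv u u <= D ^+ 2.
Proof.
move=> D0 h; rewrite -enorm_sq; rewrite ler_sqr ?nnegrE ?enorm_ge0 //.
Qed.

Lemma drift (D : R) (th z1 z2 : 'rV[R]_n) : 0 <= D -> dotv th th <= D ^+ 2 ->
  dotv z1 z1 <= D ^+ 2 -> dotv z2 z2 <= D ^+ 2 ->
  dotv (th - z2) (th - z2) <= dotv (th - z1) (th - z1) + 4 * D * enorm (z2 - z1).
Proof.
move=> D0 ht h1 h2.
have -> : th - z2 = (th - z1) - (z2 - z1) by apply/rowP => i; rewrite !mxE; ring.
rewrite [X in X <= _]nsqB.
suff : - (2 * dotv (th - z1) (z2 - z1)) + dotv (z2 - z1) (z2 - z1) <= 4 * D * enorm (z2 - z1).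
  lra.
have -> : - (2 * dotv (th - z1) (z2 - z1)) + dotv (z2 - z1) (z2 - z1)
  = dotv (z2 - z1) ((z2 + z1) - 2 *: th).
  have -> : (z2 + z1) - 2 *: th = (z2 - z1) - 2 *: (th - z1).
    by apply/rowP => i; rewrite !mxE; ring.
  rewrite [X in _ = X]dotvBr dotvZr (dotvC (z2 - z1)); ring.
apply: le_trans (CS _ _) _.
rewrite mulrC ler_wpM2r ?enorm_ge0 //.
have h : dotv (z2 + z1 - 2 *: th) (z2 + z1 - 2 *: th) <= (4 * D) ^+ 2.
  apply: le_trans (nsqB_le _ _) _.
  rewrite nsqZ.
  have := nsqD_le z2 z1. lra.
rewrite -ler_sqr ?nnegrE ?enorm_ge0 ?mulr_ge0 // enorm_sq //.
Qed.
End Main.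
Arguments par_ineq {R n}.
Arguments par_ineq' {R n}.
Arguments nsqD_le {R n}.
Arguments nsqB_le {R n}.
Arguments nsq_bound {R n}.
Arguments drift {R n}.
Section Steps.
Variable (R : realType) (n : nat).

Lemma step_ineq (th th' z z' g : 'rV[R]_n) (l D G e s s' a fth fz : R) :
  0 < l -> 0 <= D -> 0 < a -> 0 <= e -> l * s * e = 1 -> a * s <= 1 ->
  s <= s' + 1 -> 0 <= s ->
  dotv th' th' <= D ^+ 2 -> dotv z z <= D ^+ 2 -> dotv z' z' <= D ^+ 2 ->
  dotv g g <= G ^+ 2 ->
  fth - fz <= dotv g (th - z) - l / 2 * dotv (th - z) (th - z) ->
  dotv (th' - z) (th' - z) <= dotv ((th - z) - e *: g) ((th - z) - e *: g) ->
  fth - fz <= l / 2 * s' * dotv (th - z) (th - z)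
              - l / 2 * s * dotv (th' - z') (th' - z')
              + (2 * D * l / a * enorm (z' - z) + G ^+ 2 / 2 * e).
Proof.
move=> l0 D0 a0 het hls hsa hsS hs0 h1 h2 h3 hg hr pn.
rewrite [X in _ <= X]nsqB dotvZr nsqZ in pn.
have dr := drift D th' z z' D0 h1 h2 h3.
set d := dotv (th - z) (th - z) in hr pn *.
set d1 := dotv (th' - z') (th' - z') in dr *.
set m := enorm (z' - z) in dr *.
set B := dotv g (th - z) in hr *.
have hd : 0 <= d by apply: dotv_ge0.
have hm : 0 <= m by apply: enorm_ge0.
have ls0 : 0 <= l * s by apply: mulr_ge0 => //; apply: ltW.
have hB2 : 2 * (e * B) <= d - d1 + 4 * D * m + e ^+ 2 * G ^+ 2.
  have : e ^+ 2 * dotv g g <= e ^+ 2 * G ^+ 2.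
    by apply: ler_wpM2l => //; apply: sqr_ge0.
  move: pn dr; rewrite /B dotvC -/d; lra.
have h2' := ler_wpM2l ls0 hB2.
have e3 : l * s * (2 * (e * B)) = (l * s * e) * (2 * B) by ring.
rewrite hls mul1r in e3.
have e4 : l * s * (e ^+ 2 * G ^+ 2) = (l * s * e) * (e * G ^+ 2) by ring.
rewrite hls mul1r in e4.
have h5 : l * s * (4 * D * m) <= 4 * D * l / a * m.
  have sa' : s <= a^-1 by rewrite -(ler_pM2l a0) mulfV ?gt_eqF.
  have h : 0 <= 4 * D * l * m.
    apply: mulr_ge0 => //; apply: mulr_ge0; [apply: mulr_ge0 => // | exact: ltW].
  have h' := ler_wpM2l h sa'.
  have -> : l * s * (4 * D * m) = 4 * D * l * m * s by ring.
  apply: le_trans h' _; rewrite le_eqVlt; apply/orP; left; apply/eqP; ring.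
have h6 : l * s * d - l * d <= l * s' * d.
  have : 0 <= l * d * (s' + 1 - s).
    by apply: mulr_ge0; [apply: mulr_ge0 => //; exact: ltW | rewrite subr_ge0].
  lra.
have ex : l * s * (d - d1 + 4 * D * m + e ^+ 2 * G ^+ 2) =
  l * s * d - l * s * d1 + l * s * (4 * D * m) + l * s * (e ^+ 2 * G ^+ 2) by ring.
rewrite ex e3 e4 in h2'.
have -> : 2 * D * l / a * m = (4 * D * l / a * m) / 2 by field; rewrite gt_eqF.
move: hr h2' h5 h6; clear; lra.
Qed.

Lemma last_ineq (th z g : 'rV[R]_n) (l G e s s' fth fz : R) :
  0 < l -> 0 <= e -> l * s * e = 1 -> s <= s' + 1 -> 0 <= s ->
  dotv g g <= G ^+ 2 ->
  fth - fz <= dotv g (th - z) - l / 2 * dotv (th - z) (th - z) ->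
  fth - fz <= l / 2 * s' * dotv (th - z) (th - z) + G ^+ 2 / 2 * e.
Proof.
move=> l0 het hls hsS hs0 hg hr.
have pn := dotv_ge0 ((th - z) - e *: g).
rewrite nsqB dotvZr nsqZ in pn.
set d := dotv (th - z) (th - z) in hr pn *.
set B := dotv g (th - z) in hr *.
have hd : 0 <= d by apply: dotv_ge0.
have ls0 : 0 <= l * s by apply: mulr_ge0 => //; apply: ltW.
have hB2 : 2 * (e * B) <= d + e ^+ 2 * G ^+ 2.
  have : e ^+ 2 * dotv g g <= e ^+ 2 * G ^+ 2.
    by apply: ler_wpM2l => //; apply: sqr_ge0.
  move: pn; rewrite /B dotvC -/d; lra.
have h2 := ler_wpM2l ls0 hB2.
have e3 : l * s * (2 * (e * B)) = (l * s * e) * (2 * B) by ring.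
rewrite hls mul1r in e3.
have e4 : l * s * (e ^+ 2 * G ^+ 2) = (l * s * e) * (e * G ^+ 2) by ring.
rewrite hls mul1r in e4.
have ex : l * s * (d + e ^+ 2 * G ^+ 2) = l * s * d + l * s * (e ^+ 2 * G ^+ 2) by ring.
rewrite ex e3 e4 in h2.
have h6 : l * s * d - l * d <= l * s' * d.
  have : 0 <= l * d * (s' + 1 - s).
    by apply: mulr_ge0; [apply: mulr_ge0 => //; exact: ltW | rewrite subr_ge0].
  lra.
move: hr h2 h6; clear; lra.
Qed.
End Steps.
Arguments step_ineq {R n}.
Arguments last_ineq {R n}.
Definition gs {R : realType} (g : R) (t : nat) : R := \sum_(k < t) g ^+ k.

Lemma eta_facts (R : realType) (l a : R) (eta : nat -> R) t :
  0 < l -> 0 < a -> a <= 1 ->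
  (forall t, eta t = (1 - (1 - a)) / (l * (1 - (1 - a) ^+ t))) -> (1 <= t)%N ->
  [/\ l * gs (1 - a) t * eta t = 1, 0 <= eta t, eta t <= (t%:R^-1 + a) / l,
      a * gs (1 - a) t <= 1 & gs (1 - a) t <= gs (1 - a) t.-1 + 1 ].
Proof.
move=> l0 a0 a1 etaE Ht.
set gamma := 1 - a.
have g0 : 0 <= gamma by rewrite /gamma subr_ge0.
have g1 : gamma <= 1 by rewrite /gamma lerBlDr lerDl ltW.
have gp k : 0 <= gamma ^+ k <= 1 by rewrite exprn_ge0 // exprn_ile1.
set s := gs gamma.
have has k : a * s k = 1 - gamma ^+ k.
  have := geom_s gamma k; rewrite -/(gs gamma k).
  by have -> : 1 - gamma = a by rewrite /gamma opprB addrC subrK.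
have s1 : 1 <= s t.
  case: t Ht => // t _; rewrite /s /gs big_ord_recl expr0.
  have : 0 <= \sum_(i < t) gamma ^+ (bump 0 i) by apply: sumr_ge0 => k _; apply: exprn_ge0.
  lra.
have sa : a * s t <= 1 by rewrite has; have := gp t; lra.
have sS : s t <= s t.-1 + 1.
  case: t Ht {s1 sa} => // t _ /=.
  by rewrite /s /gs big_ord_recr /=; have := gp t; lra.
have heta : l * s t * eta t = 1.
  rewrite etaE -/gamma.
  have -> : 1 - gamma = a by rewrite /gamma opprB addrC subrK.
  rewrite -has.
  field; rewrite !gt_eqF //; lra.
have e0 : 0 <= eta t.
  have ls : 0 < l * s t by apply: mulr_gt0 => //; lra.
  have -> : eta t = (l * s t)^-1 * (l * s t * eta t) by rewrite mulKf // gt_eqF.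
  by rewrite heta // mulr1 invr_ge0 ltW.
split => //.
have u0 : (0 : R) < t%:R by rewrite ltr0n.
have pb := pow_bound a t (ltac:(apply/andP; split; [exact: ltW|exact: a1])).
rewrite -/gamma in pb.
have key : t%:R <= s t * (1 + a * t%:R).
  have e1 : a * (s t * (1 + a * t%:R) - t%:R) = (a * s t) * (1 + a * t%:R) - a * t%:R by ring.
  rewrite has in e1.
  have : 0 <= a * (s t * (1 + a * t%:R) - t%:R) by rewrite e1; nra.
  rewrite pmulr_rge0 //; lra.
have h1 : 1 <= (t%:R^-1 + a) * s t.
  have -> : (t%:R^-1 + a) * s t = t%:R^-1 * (s t * (1 + a * t%:R)).
    by field; rewrite gt_eqF.
  have ui0 : (0:R) <= t%:R^-1 by rewrite invr_ge0 ltW.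
  have := ler_wpM2l ui0 key.
  by rewrite mulVf // gt_eqF.
rewrite ler_pdivlMr //.
have le0 : 0 <= eta t * l by apply: mulr_ge0 => //; exact: ltW.
have := ler_wpM2l le0 h1.
have -> : eta t * l * ((t%:R^-1 + a) * s t) = (t%:R^-1 + a) * (l * s t * eta t) by ring.
by rewrite heta // mulr1 mulr1.
Qed.
Arguments eta_facts {R l a eta t}.
Lemma core (R : realType) (n : nat) (S : set 'rV[R]_n) (T : nat)
  (f : nat -> 'rV[R]_n -> R) (theta z : nat -> 'rV[R]_n) (l G D a : R)
  (eta : nat -> R) :
  convex_set S -> (forall x, S x -> dotv x x <= D ^+ 2) ->
  0 < l -> 0 <= D -> 0 <= G -> 0 < a -> a <= 1 -> (1 <= T)%N ->
  (forall t, (1 <= t <= T)%N ->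
       (forall x, S x -> differentiable (f t) x) /\
       strongly_convex_on l S (f t) /\
       (forall x, S x -> enorm (grad (f t) x) <= G)) ->
  (forall t, eta t = (1 - (1 - a)) / (l * (1 - (1 - a) ^+ t))) ->
  (forall t, (1 <= t <= T)%N -> S (theta t)) ->
  (forall t, (1 <= t < T)%N ->
       is_proj S (theta t - eta t *: grad (f t) (theta t)) (theta t.+1)) ->
  (forall t, (1 <= t <= T)%N -> S (z t)) ->
  \sum_(1 <= t < T.+1) (f t (theta t) - f t (z t)) <=
   2 * D * l / a * \sum_(1 <= t < T) enorm (z t.+1 - z t)
   + G ^+ 2 / 2 * \sum_(1 <= t < T.+1) eta t.
Proof.
move=> cS nsqS l0 D0 G0 a0 a1 T1 Hf etaE thS Hproj Sz.
pose s := gs (1 - a).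
pose P t := l / 2 * s t.-1 * dotv (theta t - z t) (theta t - z t).
have rB t : (1 <= t <= T)%N -> f t (theta t) - f t (z t) <=
    dotv (grad (f t) (theta t)) (theta t - z t)
    - l / 2 * dotv (theta t - z t) (theta t - z t).
  move=> Ht; have [_ [SC _]] := Hf t Ht.
  have := SC _ _ (thS t Ht) (Sz t Ht).
  rewrite enorm_sq !(dotvBr _ _ (grad (f t) (theta t))). lra.
have gG t : (1 <= t <= T)%N ->
    dotv (grad (f t) (theta t)) (grad (f t) (theta t)) <= G ^+ 2.
  move=> Ht; have [_ [_ hG]] := Hf t Ht.
  by apply: nsq_bound => //; apply: hG; apply: thS.
have step t : (1 <= t < T)%N ->
    f t (theta t) - f t (z t) <= P t - P t.+1
      + (2 * D * l / a * enorm (z t.+1 - z t) + G ^+ 2 / 2 * eta t).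
  move=> Ht.
  have Ht' : (1 <= t <= T)%N by case/andP: Ht => -> /ltnW.
  have Ht1 : (1 <= t.+1 <= T)%N by case/andP: Ht => _ ->.
  have t1 : (1 <= t)%N by case/andP: Ht.
  have pn := proj_nonexp cS (Hproj t Ht) (Sz t Ht').
  have eqw : theta t - eta t *: grad (f t) (theta t) - z t
          = (theta t - z t) - eta t *: grad (f t) (theta t).
    by apply/rowP => i; rewrite !mxE; ring.
  rewrite eqw in pn.
  have [hls he _ hsa hsS] := eta_facts l0 a0 a1 etaE t1.
  have hs0 : 0 <= s t by apply: sumr_ge0 => k _; apply: exprn_ge0; lra.
  rewrite /P /=.
  exact: (step_ineq _ _ _ _ _ l D G (eta t) (s t) (s t.-1) a _ _ l0 D0 a0 he hls hsa hsS hs0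
     (nsqS _ (thS _ Ht1)) (nsqS _ (Sz _ Ht')) (nsqS _ (Sz _ Ht1)) (gG t Ht') (rB t Ht') pn).
have hT : f T (theta T) - f T (z T) <= P T + G ^+ 2 / 2 * eta T.
  have HT : (1 <= T <= T)%N by rewrite leqnn andbT.
  have [hls he _ _ hsS] := eta_facts l0 a0 a1 etaE T1.
  have hs0 : 0 <= s T by apply: sumr_ge0 => k _; apply: exprn_ge0; lra.
  exact: (last_ineq _ _ _ l G (eta T) (s T) (s T.-1) _ _ l0 he hls hsS hs0 (gG T HT) (rB T HT)).
rewrite big_nat_recr //=.
have hsum := ler_sum_nat step.
have tel : \sum_(1 <= t < T) (P t - P t.+1) = P 1%N - P T.
  rewrite (@telescope_sumr_eq _ 1 T (fun k => - P k)) //; first by rewrite opprK addrC.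
  by move=> k _; rewrite opprK addrC.
have P1 : P 1%N = 0 by rewrite /P /= /s /gs big_ord0 mulr0 mul0r.
have eqR : \sum_(1 <= i < T) (P i - P i.+1 +
      (2 * D * l / a * enorm (z i.+1 - z i) + G ^+ 2 / 2 * eta i)) =
    P 1%N - P T + (2 * D * l / a * \sum_(1 <= t < T) enorm (z t.+1 - z t) +
       G ^+ 2 / 2 * \sum_(1 <= t < T) eta t).
  by rewrite big_split /= tel big_split /= -!mulr_sumr.
rewrite eqR P1 sub0r in hsum.
rewrite [X in _ <= _ + _ * X]big_nat_recr //=.
move: hsum hT; clear; lra.
Qed.
Arguments core {R n S T f theta z l G D a eta}.
Theorem corollary3p3 (R : realType) (l G D : R) :
  0 < l -> 1 <= D ->
  exists C : R, 0 < C /\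
  forall (n : nat) (S : set 'rV[R]_n) (T : nat) (f : nat -> 'rV[R]_n -> R)
         (V : R) (theta z : nat -> 'rV[R]_n),
    compact S -> convex_set S ->
    (forall x, S x -> enorm x <= D) ->
    (2 <= T)%N ->
    (forall t, (1 <= t <= T)%N ->
       (forall x, S x -> differentiable (f t) x) /\
       strongly_convex_on l S (f t) /\
       (forall x, S x -> enorm (grad (f t) x) <= G)) ->
    0 <= V ->
    let gamma : R := 1 - 2^-1 * Num.sqrt
        (Num.max V (ln T%:R ^+ 2 / T%:R) / (2 * D * T%:R)) in
    let eta (t : nat) : R := (1 - gamma) / (l * (1 - gamma ^+ t)) in
    S (theta 1%N) ->
    (forall t, (1 <= t < T)%N ->
       is_proj S (theta t - eta t *: grad (f t) (theta t)) (theta t.+1)) ->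
    (forall t, (1 <= t <= T)%N -> S (z t)) ->
    \sum_(2 <= t < T.+1) enorm (z t - z t.-1) <= V ->
    \sum_(1 <= t < T.+1) (f t (theta t) - f t (z t))
      <= C * Num.max (ln T%:R) (Num.sqrt (T%:R * V)).
Proof.
move=> l0 D1.
have D0 : 0 <= D by lra.
have DD : 1 <= D ^+ 2 by nra.
have G2l : 0 <= G ^+ 2 / l by apply: divr_ge0; [apply: sqr_ge0 | lra].
have G2 : 0 <= G ^+ 2 by apply: sqr_ge0.
exists (16 * D ^+ 2 * l + 2 * (G ^+ 2 / l) + (G ^+ 2 + 4 * D ^+ 2)).
split.
  have : 0 <= D ^+ 2 * l by apply: mulr_ge0; lra.
  lra.
move=> n S T f V theta z cpt cS HD T2 Hf V0 gamma eta S1 Hproj Sz Hpath.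
pose M := Num.max V (ln T%:R ^+ 2 / T%:R).
pose a : R := 2^-1 * Num.sqrt (M / (2 * D * T%:R)).
have gam : gamma = 1 - a by [].
have etaE t : eta t = (1 - gamma) / (l * (1 - gamma ^+ t)) by [].
clearbody eta; clearbody gamma.
set Mx := Num.max (ln T%:R) (Num.sqrt (T%:R * V)).
have Tp : (0 : R) < T%:R by rewrite ltr0n; apply: leq_trans T2.
have T1 : (1 : R) < T%:R by rewrite ltr1n.
have lnT0 : 0 < ln (T%:R : R) by apply: ln_gt0.
have Mx_ln : ln T%:R <= Mx by rewrite /Mx le_max lexx.
have Mx_sq : Num.sqrt (T%:R * V) <= Mx by rewrite /Mx le_max lexx orbT.
have Mx0 : 0 <= Mx by lra.
have thS : forall t, (1 <= t <= T)%N -> S (theta t).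
  elim=> [//|t IH] /andP[_ tT].
  have [->//|t0] := eqVneq t 0%N.
  have Ht : (1 <= t < T)%N by rewrite lt0n t0.
  by have [] := Hproj t Ht.
have nsqS x : S x -> dotv x x <= D ^+ 2 by move=> Sx; apply: nsq_bound => //; apply: HD.
have G0 : 0 <= G.
  have [_ [_ hG]] := Hf 1%N (ltnW T2).
  by apply: le_trans (hG _ S1); apply: enorm_ge0.
pose g t := grad (f t) (theta t).
pose d t := dotv (theta t - z t) (theta t - z t).
pose B t := dotv (g t) (theta t - z t).
have d0 t : 0 <= d t by apply: dotv_ge0.
have gG t : (1 <= t <= T)%N -> dotv (g t) (g t) <= G ^+ 2.
  move=> Ht; have [_ [_ hG]] := Hf t Ht.
  by apply: nsq_bound => //; apply: hG; apply: thS.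
have rB t : (1 <= t <= T)%N -> f t (theta t) - f t (z t) <= B t - l / 2 * d t.
  move=> Ht; have [_ [SC _]] := Hf t Ht.
  have := SC _ _ (thS t Ht) (Sz t Ht).
  rewrite enorm_sq /B /d /g !(dotvBr _ _ (grad (f t) (theta t))). lra.
have [VT|VT] := lerP V T%:R; last first.
  set K0 := G ^+ 2 + 4 * D ^+ 2.
  have step t : (1 <= t < T.+1)%N -> f t (theta t) - f t (z t) <= K0.
    rewrite ltnS => Ht; apply: le_trans (rB t Ht) _.
    have h1 := par_ineq (g t) (theta t - z t).
    have h2 := nsqB_le (theta t) (z t).
    have h3 := nsqS _ (thS t Ht).
    have h4 := nsqS _ (Sz t Ht).
    have h5 := gG t Ht.
    have h6 : 0 <= l * d t by apply: mulr_ge0; [lra | apply: d0].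
    rewrite /B /d /K0 in h6 *. lra.
  apply: le_trans (ler_sum_nat step) _.
  rewrite sumr_const_nat subn1 /= -mulr_natr.
  have TM : T%:R <= Mx.
    apply: le_trans Mx_sq.
    rewrite -ler_sqr ?nnegrE ?sqrtr_ge0 ?ler0n // sqr_sqrtr; last first.
      by apply: mulr_ge0; lra.
    rewrite expr2; apply: ler_wpM2l; lra.
  have K0p : 0 <= K0 by rewrite /K0; lra.
  have := ler_wpM2l K0p TM.
  have : 0 <= D ^+ 2 * l * Mx by apply: mulr_ge0 => //; apply: mulr_ge0; lra.
  have : 0 <= G ^+ 2 / l * Mx by apply: mulr_ge0.
  rewrite /K0; nra.
have M0 : 0 < M.
  have h : (0 : R) < ln T%:R ^+ 2 / T%:R by rewrite divr_gt0 // exprn_gt0.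
  by apply: lt_le_trans h _; rewrite /M le_max lexx orbT.
have VM : V <= M by rewrite /M le_max lexx.
have M8 : M <= 8 * D * T%:R.
  rewrite /M ge_max; apply/andP; split; first nra.
  rewrite ler_pdivrMr //.
  have := ln_sublinear Tp.
  have : 8 * D * T%:R * T%:R >= T%:R * T%:R by nra.
  rewrite expr2; nra.
have DT0 : 0 < 2 * D * T%:R by apply: mulr_gt0 => //; lra.
have x0 : 0 < M / (2 * D * T%:R) by apply: divr_gt0.
have a0 : 0 < a by apply: mulr_gt0; [lra | rewrite sqrtr_gt0].
have asq : a ^+ 2 = M / (8 * D * T%:R).
  rewrite /a exprMn sqr_sqrtr; last by apply: ltW.
  field; apply/andP; split; rewrite gt_eqF //; lra.
have a1 : a <= 1.
  rewrite -ler_sqr ?nnegrE ?ler01 ?(ltW a0) // asq expr1n ler_pdivrMr; last nra.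
  lra.
clearbody a.
have etaE' t : eta t = (1 - (1 - a)) / (l * (1 - (1 - a) ^+ t)) by rewrite etaE gam.
have T1n : (1 <= T)%N by apply: ltnW.
have hc := core cS nsqS l0 D0 G0 a0 a1 T1n Hf etaE' thS Hproj Sz.
rewrite big_add1 /= in Hpath.
have hes : \sum_(1 <= t < T.+1) eta t <= (1 + ln T%:R + T%:R * a) / l.
  apply: le_trans (ler_sum_nat (F := eta) (G := fun t => (t%:R^-1 + a) / l) _) _.
    by move=> t /andP[Ht _]; have [] := eta_facts l0 a0 a1 etaE' Ht.
  rewrite -mulr_suml big_split /= sumr_const_nat subn1 /= ler_pM2r ?invr_gt0 //.
  have := @harmonic R T T1n.
  rewrite -mulr_natl; lra.
have sq0 : 0 <= Num.sqrt (T%:R * V) by apply: sqrtr_ge0.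
have TV0 : 0 <= T%:R * V by apply: mulr_ge0 => //; apply: ltW.
have Dp : 0 < D by lra.
have hV' : V <= 8 * D * a * Num.sqrt (T%:R * V).
  rewrite -ler_sqr ?nnegrE //; last first.
    by apply: mulr_ge0 => //; apply: mulr_ge0; [apply: mulr_ge0 => //| apply: ltW].
  rewrite !exprMn sqr_sqrtr // asq.
  have -> : 8 ^+ 2 * D ^+ 2 * (M / (8 * D * T%:R)) * (T%:R * V) = 8 * D * M * V.
    by field; apply/andP; split; apply: lt0r_neq0.
  have h1 : V * V <= M * V by apply: ler_wpM2r.
  have h2 : 0 <= (8 * D - 1) * (M * V).
    by apply: mulr_ge0; [lra | apply: mulr_ge0 => //; apply: ltW].
  rewrite expr2; move: h1 h2; clear; lra.
have hV : 2 * D * l / a * V <= 16 * D ^+ 2 * l * Mx.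
  have c0 : 0 <= 2 * D * l / a.
    by apply: divr_ge0; [apply: mulr_ge0; [apply: mulr_ge0 => //| apply: ltW] | apply: ltW].
  apply: le_trans (ler_wpM2l c0 hV') _.
  have -> : 2 * D * l / a * (8 * D * a * Num.sqrt (T%:R * V)) =
      16 * D ^+ 2 * l * Num.sqrt (T%:R * V) by field; apply: lt0r_neq0.
  apply: ler_wpM2l => //.
  by apply: mulr_ge0; [apply: mulr_ge0 => //; apply: sqr_ge0 | apply: ltW].
have hTa : T%:R * a <= Mx.
  have TM : T%:R * M <= Mx ^+ 2.
    have [hv|hv] := leP V (ln T%:R ^+ 2 / T%:R).
      rewrite /M max_r // mulrC mulfVK; last by apply: lt0r_neq0.
      by rewrite ler_sqr ?nnegrE //; apply: ltW.
    rewrite /M max_l; last by apply: ltW.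
    apply: le_trans (_ : Num.sqrt (T%:R * V) ^+ 2 <= _).
      by rewrite sqr_sqrtr.
    by rewrite ler_sqr ?nnegrE.
  rewrite -ler_sqr ?nnegrE //; last by apply: mulr_ge0; apply: ltW.
  rewrite exprMn asq.
  have -> : T%:R ^+ 2 * (M / (8 * D * T%:R)) = (T%:R * M) / (8 * D).
    by field; apply/andP; split; apply: lt0r_neq0.
  apply: le_trans TM.
  rewrite ler_pdivrMr; last lra.
  have : 0 <= T%:R * M by apply: mulr_ge0; apply: ltW.
  move=> h; have : 0 <= (8 * D - 1) * (T%:R * M) by apply: mulr_ge0 => //; lra.
  move: h; clear; lra.
have hln1 : 1 <= 2 * ln (T%:R : R).
  have h2 : (-1 : R) < - 2^-1 by rewrite ltrN2 invf_lt1 // ltr1n.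
  have := le_ln1Dx h2.
  have -> : 1 - 2^-1 = (2^-1 : R) by field.
  rewrite lnV ?posrE // => h.
  have : ln (2 : R) <= ln T%:R by rewrite ler_ln ?posrE // ler_nat.
  move: h; clear; lra.
have c1 : 0 <= 2 * D * l / a.
  by apply: divr_ge0; [apply: mulr_ge0; [apply: mulr_ge0 => //| apply: ltW] | apply: ltW].
have c2 : 0 <= G ^+ 2 / 2 by apply: divr_ge0.
have k1 := ler_wpM2l c1 Hpath.
have k2 := ler_wpM2l c2 hes.
have ek : G ^+ 2 / 2 * ((1 + ln T%:R + T%:R * a) / l) = G ^+ 2 / l / 2 * (1 + ln T%:R + T%:R * a).
  by field; apply: lt0r_neq0.
rewrite ek in k2.
have k3 : G ^+ 2 / l / 2 * (1 + ln T%:R + T%:R * a) <= G ^+ 2 / l / 2 * (4 * Mx).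
  by apply: ler_wpM2l; [apply: divr_ge0 | lra].
have k4 : 0 <= (G ^+ 2 + 4 * D ^+ 2) * Mx by apply: mulr_ge0 => //; lra.
move: hc k1 k2 k3 k4 hV; clear; lra.
Qed.
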